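(* Let $\mathcal{M}$ be a finite $\mathcal{R}$-trivial monoid and let $\mathcal{S}$ be a generating set for $\mathcal{M}$ (as a monoid). Two elements $\sigma,\sigma'\in\mathcal{M}$ have the same loop-type if and only if $\mathcal{L}^{\mathcal{S}}_\sigma=\mathcal{L}^{\mathcal{S}}_{\sigma'}$.
   Context: $\mathcal{M}$ is $\mathcal{R}$-trivial: $\sigma\mathcal{M}=\tau\mathcal{M}$ implies $\sigma=\tau$. For $\sigma\in\mathcal{M}$, $\mathcal{L}_\sigma:=\{\tau\in\mathcal{M}:\sigma\tau=\sigma\}$ and $\mathcal{L}^{\mathcal{S}}_\sigma:=\mathcal{L}_\sigma\cap\mathcal{S}=\{\kappa\in\mathcal{S}:\sigma\kappa=\sigma\}$. Elements $\sigma,\sigma'$ have the same loop-type ($\sigma\sim\sigma'$) if $\mathcal{L}_\sigma=\mathcal{L}_{\sigma'}$. *)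

(* Defs.v *)
From mathcomp Require Import all_boot.
Set Implicit Arguments. Unset Strict Implicit. Unset Printing Implicit Defensive.

Definition is_monoid (M : finType) (mul : M -> M -> M) (one : M) : Prop :=
  (forall a b c, mul a (mul b c) = mul (mul a b) c) /\
  (forall a, mul one a = a) /\ (forall a, mul a one = a).

Definition right_ideal (M : finType) (mul : M -> M -> M) (s : M) : {set M} :=
  [set mul s x | x : M].

Definition R_trivial (M : finType) (mul : M -> M -> M) : Prop :=
  forall s t : M, right_ideal mul s = right_ideal mul t -> s = t.

Definition generates (M : finType) (mul : M -> M -> M) (one : M) (S : {set M}) : Prop :=
  forall m : M, exists w : seq M, all (fun x => x \in S) w /\ foldr mul one w = m.

Definition Lset (M : finType) (mul : M -> M -> M) (s : M) : {set M} :=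
  [set t : M | mul s t == s].

Definition LSset (M : finType) (mul : M -> M -> M) (S : {set M}) (s : M) : {set M} :=
  Lset mul s :&: S.

Definition same_loop_type (M : finType) (mul : M -> M -> M) (s s' : M) : Prop :=
  Lset mul s = Lset mul s'.

(* Main.v *)
Require Import Defs.
From mathcomp Require Import all_boot.

Lemma key (M : finType) (mul : M -> M -> M) (one : M)
  (hmon : is_monoid mul one) (hR : R_trivial mul) (s a b : M) :
  mul s (mul a b) = s -> mul s a = s.
Proof.
case: hmon => hA [h1l h1r] E; apply: hR; apply/setP => y.
apply/imsetP/imsetP => [[x _ ->]|[x _ ->]].
  by exists (mul a x) => //; rewrite hA.
by exists (mul b x) => //; rewrite -{1}E !hA.
Qed.

Lemma wordL (M : finType) (mul : M -> M -> M) (one : M)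
  (hmon : is_monoid mul one) (hR : R_trivial mul) (s : M) (w : seq M) :
  (mul s (foldr mul one w) == s) = all (fun x => mul s x == s) w.
Proof.
have hm := hmon; case: hm => hA [h1l h1r].
elim: w => [|x w IH] /=; first by rewrite h1r eqxx.
apply/eqP/andP => [E|[/eqP E1 E2]].
  have E1 := @key _ _ _ hmon hR _ _ _ E; split; first by rewrite E1.
  by rewrite -IH; apply/eqP; rewrite -{2}E hA E1.
by rewrite hA E1; apply/eqP; rewrite IH.
Qed.

Theorem mainTheorem5 (M : finType) (mul : M -> M -> M) (one : M) (S : {set M})
  (hmon : is_monoid mul one) (hR : R_trivial mul) (hS : generates mul one S)
  (s s' : M) :
  same_loop_type mul s s' <-> LSset mul S s = LSset mul S s'.
Proof.
rewrite /same_loop_type /LSset; split => [->//|E].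
apply/setP => t; rewrite !inE.
have [w [hw <-]] := hS t.
rewrite !wordL //; apply: eq_in_all => x /(allP hw) xS.
move/setP: E => /(_ x); rewrite !inE xS !andbT.
by [].
Qed.
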